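(* Let $(M,g,J_{TM})$ be a para-Hermitian manifold and let $(E,J)$ be an exact para-Hermitian algebroid over $M$ with anchor $\rho$ and eigenbundles $E_\pm$. If $E$ admits a para-complex connection $A:TM\to E$, then $$E_+=a_-^*(T^{(0,1)}M)\oplus A_+(T^+M),\qquad E_-=a_+^*(T^{(1,0)}M)\oplus A_-(T^-M).$$
   Context: A Courant algebroid $(E,\rho,\langle\cdot,\cdot\rangle,[\cdot,\cdot])$ over $M$ is a vector bundle with a non-degenerate symmetric pairing, a skew-symmetric bracket and an anchor $\rho:E\to TM$ satisfying the usual axioms; $\rho^*:T^*M\to E$ is given by $\langle\rho^*\xi,e\rangle=\xi(\rho e)$, and $E$ is exact if $0\to T^*M\xrightarrow{\rho^*}E\xrightarrow{\rho}TM\to0$ is exact. A para-Hermitian algebroid is a Courant algebroid with $J\in\Gamma(\mathrm{End}E)$, $J^2=\mathrm{Id}$, equal-rank eigenbundles $E_\pm$ (for $\pm1$), $\langle J\cdot,J\cdot\rangle=-\langle\cdot,\cdot\rangle$, and $\Gamma(E_\pm)$ both closed under the bracket. A para-Hermitian manifold $(M,g,J_{TM})$ has split-signature $g$, $J_{TM}^2=\mathrm{Id}$ with equal-rank integrable eigenbundles $T^\pm M$, and $g(J_{TM}\cdot,J_{TM}\cdot)=-g$. $T^{(1,0)}M\subset T^*M$ is the annihilator of $T^-M$ and $T^{(0,1)}M$ the annihilator of $T^+M$. Let $\pi_{E_\pm}$ be the projections for $E=E_+\oplus E_-$, $a_\pm=\rho|_{E_\pm}:E_\pm\to TM$, and $a_\pm^*:T^*M\to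 E$ be defined by $\langle a_\pm^*\xi,e\rangle=\xi(\rho(\pi_{E_\pm}e))$ for all $e\in E$ (so $a_\pm^*$ takes values in $E_\mp$). A connection is a bundle map $A:TM\to E$ with $\rho\circ A=\mathrm{Id}$ and isotropic image; it is para-complex if $J\circ A=A\circ J_{TM}$; $A_\pm$ denotes the restriction of $A$ to $T^\pm M$. *)

(* Defs.v *)
(* Fiberwise (pointwise) linear-algebra model of the
   para-Hermitian data.  Row-vector convention: a vector is a
   row 'rV_n, a linear map V -> W is a matrix 'M_(dim V, dim W) acting by
   v |-> v *m f.  Tangent fiber T_xM = 'rV_m, cotangent fiber = 'rV_m with
   duality xi(v) = xi *m v^T, fiber E_x = 'rV_k. *)
From HB Require Import structures.
From mathcomp Require Import all_boot all_order all_algebra.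
Set Implicit Arguments. Unset Strict Implicit. Unset Printing Implicit Defensive.
Import Order.TTheory GRing.Theory Num.Theory.
Local Open Scope ring_scope.

Section ParaHermitianFiber.
Variable R : realFieldType.

(* pairing <e,f> = e *m G *m f^T ; metric g(v,w) = v *m g *m w^T *)

Definition para_hermitian_fiber m (g JT : 'M[R]_m) : Prop :=
  [/\ g^T = g, g \in unitmx, JT *m JT = 1%:M,
      \rank (eigenspace JT 1) = \rank (eigenspace JT (-1)) &
      JT *m g *m JT^T = - g].

(* rho^* : T^*M -> E,  <rho^* xi, e> = xi (rho e) *)
Definition rho_star m k (G : 'M[R]_k) (rho : 'M[R]_(k, m)) : 'M[R]_(m, k) :=
  rho^T *m invmx G.

(* Courant-algebroid fiber data: symmetric nondegenerate pairing, anchor,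
   exactness 0 -> T^* -> E -> T -> 0 *)
Definition exact_pairing_anchor m k (G : 'M[R]_k) (rho : 'M[R]_(k, m)) : Prop :=
  [/\ G^T = G, G \in unitmx,
      row_full rho,
      row_free (rho_star G rho) &
      (rho_star G rho == kermx rho)%MS].

Definition para_hermitian_J k (G J : 'M[R]_k) : Prop :=
  [/\ J *m J = 1%:M,
      \rank (eigenspace J 1) = \rank (eigenspace J (-1)) &
      J *m G *m J^T = - G].

Definition Eplus k (J : 'M[R]_k) := eigenspace J 1.
Definition Eminus k (J : 'M[R]_k) := eigenspace J (-1).
Definition pi_Eplus k (J : 'M[R]_k) := proj_mx (Eplus J) (Eminus J).
Definition pi_Eminus k (J : 'M[R]_k) := proj_mx (Eminus J) (Eplus J).

(* a_+-^* : T^*M -> E, <a_+-^* xi, e> = xi (rho (pi_{E+-} e)) *)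
Definition a_plus_star m k (G J : 'M[R]_k) (rho : 'M[R]_(k, m)) : 'M[R]_(m, k) :=
  (pi_Eplus J *m rho)^T *m invmx G.
Definition a_minus_star m k (G J : 'M[R]_k) (rho : 'M[R]_(k, m)) : 'M[R]_(m, k) :=
  (pi_Eminus J *m rho)^T *m invmx G.

(* T^+M, T^-M and the annihilators T^(1,0) = ann T^-, T^(0,1) = ann T^+ *)
Definition Tplus m (JT : 'M[R]_m) := eigenspace JT 1.
Definition Tminus m (JT : 'M[R]_m) := eigenspace JT (-1).
Definition T10 m (JT : 'M[R]_m) : 'M[R]_m := kermx (Tminus JT)^T.
Definition T01 m (JT : 'M[R]_m) : 'M[R]_m := kermx (Tplus JT)^T.

Definition connection m k (G : 'M[R]_k) (rho : 'M[R]_(k, m)) (A : 'M[R]_(m, k)) : Prop :=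
  A *m rho = 1%:M /\ A *m G *m A^T = 0.

Definition para_complex m k (J : 'M[R]_k) (JT : 'M[R]_m) (A : 'M[R]_(m, k)) : Prop :=
  JT *m A = A *m J.

End ParaHermitianFiber.

(* Main.v *)
Require Import Defs.
From HB Require Import structures.
From mathcomp Require Import all_boot all_order all_algebra.
From mathcomp Require Import ring zify.
Set Implicit Arguments. Unset Strict Implicit. Unset Printing Implicit Defensive.
Import Order.TTheory GRing.Theory Num.Theory.
Local Open Scope ring_scope.

Definition Pp (R : realFieldType) n (s : R) (M : 'M[R]_n) : 'M[R]_n :=
  2^-1 *: (1%:M + s *: M).

Lemma two_neq0 (R : realFieldType) : (2 : R) != 0.
Proof. by rewrite pnatr_eq0. Qed.

Lemma Pp_mul (R : realFieldType) n (s : R) (M : 'M[R]_n) :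
  M *m M = 1%:M -> (s = 1 \/ s = -1) -> Pp s M *m M = s *: Pp s M.
Proof.
move=> HM Hs; rewrite /Pp -scalemxAl mulmxDl mul1mx -scalemxAl HM.
by apply/matrixP=> i j; rewrite !mxE; case: Hs => ->; ring.
Qed.

Lemma mul_Pp (R : realFieldType) n (s : R) (M : 'M[R]_n) :
  M *m M = 1%:M -> (s = 1 \/ s = -1) -> M *m Pp s M = s *: Pp s M.
Proof.
move=> HM Hs; rewrite /Pp -scalemxAr mulmxDr mulmx1 -scalemxAr HM.
by apply/matrixP=> i j; rewrite !mxE; case: Hs => ->; ring.
Qed.

Lemma Pp_sub (R : realFieldType) n (s : R) (M : 'M[R]_n) :
  M *m M = 1%:M -> (s = 1 \/ s = -1) -> (Pp s M <= eigenspace M s)%MS.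
Proof. by move=> HM Hs; apply/eigenspaceP; apply: Pp_mul. Qed.

Lemma Pp_add (R : realFieldType) n (s : R) (M : 'M[R]_n) :
  Pp s M + Pp (-s) M = 1%:M.
Proof.
rewrite /Pp; apply/matrixP=> i j; rewrite !mxE.
by field.
Qed.

Lemma Pp_idem (R : realFieldType) n (s : R) (M : 'M[R]_n) :
  M *m M = 1%:M -> (s = 1 \/ s = -1) -> Pp s M *m Pp s M = Pp s M.
Proof.
move=> HM Hs; rewrite {1}/Pp -scalemxAl mulmxDl mul1mx -scalemxAl mul_Pp //.
rewrite /Pp; apply/matrixP=> i j; rewrite !mxE.
by case: Hs => ->; field.
Qed.

Lemma sopp (R : realFieldType) (s : R) : (s = 1 \/ s = -1) -> (-s = 1 \/ -s = -1).
Proof. by case=> ->; [right|left; rewrite opprK]. Qed.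

Lemma eig_cap0 (R : realFieldType) n (s : R) (M : 'M[R]_n) :
  (s = 1 \/ s = -1) -> (eigenspace M s :&: eigenspace M (-s) = 0)%MS.
Proof.
move=> Hs; apply/eqP; rewrite -submx0.
set X := (_ :&: _)%MS.
have := submx_refl X; rewrite {2}/X sub_capmx => /andP[/eigenspaceP h1 /eigenspaceP h2].
have : (s + s) *: X = 0 by rewrite scalerDl -{1}h1 h2 scaleNr addNr.
move/eqP; rewrite scalemx_eq0 => /orP[|/eqP->]; last by [].
case: Hs => -> /eqP; [|rewrite -opprD => /eqP; rewrite oppr_eq0 => /eqP]; move=> h; exfalso; move: h; apply/eqP; by rewrite -(natrD R 1 1) pnatr_eq0.
Qed.

Lemma eig_full (R : realFieldType) n (s : R) (M : 'M[R]_n) :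
  M *m M = 1%:M -> (s = 1 \/ s = -1) ->
  (1%:M <= eigenspace M s + eigenspace M (-s))%MS.
Proof.
move=> HM Hs; rewrite -(Pp_add s M) addmx_sub_adds // Pp_sub //; exact: sopp.
Qed.

Lemma eig_rank (R : realFieldType) n (s : R) (M : 'M[R]_n) :
  M *m M = 1%:M -> (s = 1 \/ s = -1) ->
  (\rank (eigenspace M s) + \rank (eigenspace M (-s)))%N = n.
Proof.
move=> HM Hs; rewrite -mxrank_disjoint_sum ?eig_cap0 //.
apply/eqP; rewrite eqn_leq rank_leq_col /=.
by rewrite -{1}(mxrank1 R n) mxrankS // eig_full.
Qed.

Lemma proj_Pp (R : realFieldType) n (s : R) (M : 'M[R]_n) :
  M *m M = 1%:M -> (s = 1 \/ s = -1) ->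
  proj_mx (eigenspace M (-s)) (eigenspace M s) = Pp (-s) M.
Proof.
move=> HM Hs; apply/eqP; rewrite -subr_eq0 -submx0.
have Hs' := sopp Hs.
have <- := eig_cap0 M Hs.
rewrite capmxC sub_capmx; apply/andP; split.
  rewrite addmx_sub // ?eqmx_opp ?Pp_sub //.
  by rewrite -[proj_mx _ _]mul1mx proj_mx_sub.
have -> : proj_mx (eigenspace M (- s)) (eigenspace M s) - Pp (- s) M =
   Pp s M - (1%:M - 1%:M *m proj_mx (eigenspace M (- s)) (eigenspace M s)).
  by rewrite mul1mx -(Pp_add s M); apply/matrixP=> i j; rewrite !mxE; ring.
rewrite addmx_sub ?eqmx_opp ?Pp_sub // proj_mx_compl_sub //.
by have := eig_full HM Hs'; rewrite opprK.
Qed.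
Lemma core (R : realFieldType) (m k : nat) (JT : 'M[R]_m) (G J : 'M[R]_k)
  (rho : 'M[R]_(k, m)) (A : 'M[R]_(m, k)) (s : R) :
  (s = 1 \/ s = -1) -> JT *m JT = 1%:M -> J *m J = 1%:M ->
  \rank (eigenspace J s) = \rank (eigenspace J (-s)) ->
  G \in unitmx -> J *m G *m J^T = - G ->
  A *m rho = 1%:M -> A *m G *m A^T = 0 -> JT *m A = A *m J -> k = (m + m)%N ->
  (eigenspace J s == kermx (eigenspace JT s)^T *m
       ((proj_mx (eigenspace J (-s)) (eigenspace J s) *m rho)^T *m invmx G)
     + eigenspace JT s *m A)%MS &&
  mxdirect (kermx (eigenspace JT s)^T *m
       ((proj_mx (eigenspace J (-s)) (eigenspace J s) *m rho)^T *m invmx G)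
     + eigenspace JT s *m A).
Proof.
move=> Hs HJT HJ Hrk HGu HJG HAr HAG HAJ Hkm.
have Hs' := sopp Hs.
rewrite proj_Pp //.
set Tp := eigenspace JT s; set K := kermx Tp^T.
set Q := Pp (-s) J; set N := Pp (-s) JT.
set astar := (Q *m rho)^T *m invmx G.
have e1 : G *m J^T = - (J *m G).
  by have := congr1 (mulmx J) HJG; rewrite mulmxN !mulmxA HJ mul1mx.
have HGJ : invmx G *m J = - (J^T *m invmx G).
  rewrite -[invmx G *m J](mulmxK HGu) -(mulmxA (invmx G)) -[J *m G]opprK -e1.
  by rewrite mulmxN mulNmx mulmxA mulVmx // mul1mx.
have aJ : astar *m J = s *: astar.
  rewrite /astar -mulmxA HGJ mulmxN mulmxA -trmx_mul mulmxA mul_Pp //.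
  by rewrite -scalemxAl linearZ /= -scalemxAl scaleNr opprK.
have TA : Tp *m A *m J = s *: (Tp *m A).
  rewrite -mulmxA -HAJ mulmxA.
  have h : Tp *m JT = s *: Tp by apply/eigenspaceP.
  by rewrite h -scalemxAl.
have AQ : A *m Q = N *m A.
  rewrite /Q /N /Pp -scalemxAr mulmxDr mulmx1 -scalemxAr -HAJ.
  by rewrite -scalemxAl mulmxDl mul1mx -scalemxAl.
have key : astar *m (G *m (N *m A)^T) = N^T.
  rewrite /astar -mulmxA mulKmx // -trmx_mul -mulmxA (mulmxA A) AQ.
  by rewrite !mulmxA Pp_idem // -mulmxA HAr mulmx1.
have KN : K *m N^T = K.
  have KP : K *m (Pp s JT)^T = 0.
    have /submxP[D ->] := Pp_sub HJT Hs.
    by rewrite trmx_mul mulmxA mulmx_ker mul0mx.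
  apply: esym; rewrite -{1}[K]mulmx1 -trmx1 -(Pp_add s JT) linearD /=.
  by rewrite mulmxDr KP add0r.
have AGN : A *m (G *m (N *m A)^T) = 0.
  by rewrite trmx_mul (mulmxA G) (mulmxA A) (mulmxA A G) HAG mul0mx.
have rK : \rank (K *m astar) = \rank K.
  apply/eqP; rewrite eqn_leq mxrankM_maxl /=.
  rewrite -{1}KN -key (mulmxA K astar); exact: mxrankM_maxl.

have rA : row_free A.
  rewrite /row_free eqn_leq rank_leq_row /=.
  by rewrite -{1}(mxrank1 R m) -HAr mxrankM_maxl.
have rTA : \rank (Tp *m A) = \rank Tp by rewrite mxrankMfree.
have cap : (K *m astar :&: Tp *m A = 0)%MS.
  apply/eqP; rewrite -submx0; set X := (_ :&: _)%MS.
  have := submx_refl X; rewrite {2}/X sub_capmx.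
  case/andP=> /submxP[D1 f1] /submxP[D2 f2].
  have h : D1 *m K = 0.
    have <- : X *m (G *m (N *m A)^T) = D1 *m K by rewrite f1 -(mulmxA D1) -(mulmxA K) key KN.
    by rewrite f2 -(mulmxA D2) -(mulmxA Tp) AGN !mulmx0.
  by rewrite f1 mulmxA h mul0mx sub0mx.
have rS : \rank (K *m astar + Tp *m A)%MS = m.
  rewrite mxrank_disjoint_sum // rK rTA /K mxrank_ker mxrank_tr subnK //.
  exact: rank_leq_row.
have rEp : \rank (eigenspace J s) = m.
  have := eig_rank HJ Hs; rewrite -Hrk; lia.
have Sub : (K *m astar + Tp *m A <= eigenspace J s)%MS.
  rewrite addsmx_sub; apply/andP; split; apply/eigenspaceP; last exact: TA.
  rewrite -mulmxA aJ; exact/esym/scalemxAr.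
have /andP[_ h2] : (K *m astar + Tp *m A == eigenspace J s)%MS.
  by rewrite -(mxrank_leqif_eq Sub).2 rS rEp.
apply/andP; split; first by apply/andP; split.
by apply/mxdirect_addsP; exact: cap.
Qed.

Lemma dim_k (R : realFieldType) (m k : nat) (G : 'M[R]_k) (rho : 'M[R]_(k, m)) :
  exact_pairing_anchor G rho -> k = (m + m)%N.
Proof.
case=> _ _ Hf Hfr Heq.
have r1 : \rank rho = m by apply/eqP.
have r2 : \rank (rho_star G rho) = m by apply/eqP.
have := eqmx_rank Heq; rewrite r2 mxrank_ker r1.
have := rank_leq_row rho; rewrite r1; lia.
Qed.

Theorem mainTheorem4 (R : realFieldType) (m k : nat)
    (g JT : 'M[R]_m) (G J : 'M[R]_k) (rho : 'M[R]_(k, m)) (A : 'M[R]_(m, k)) :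
  para_hermitian_fiber g JT ->
  exact_pairing_anchor G rho ->
  para_hermitian_J G J ->
  connection G rho A ->
  para_complex J JT A ->
  [/\ (Eplus J == T01 JT *m a_minus_star G J rho + Tplus JT *m A)%MS,
      mxdirect (T01 JT *m a_minus_star G J rho + Tplus JT *m A),
      (Eminus J == T10 JT *m a_plus_star G J rho + Tminus JT *m A)%MS &
      mxdirect (T10 JT *m a_plus_star G J rho + Tminus JT *m A)].
Proof.
move=> [_ _ HJT _ _] Hex [HJ Hrk HJG] [HAr HAG] HAJ.
have Hkm := dim_k Hex.
have HGu : G \in unitmx by case: Hex.
have /andP[a1 a2] := core (s := 1) (or_introl erefl) HJT HJ Hrk HGu HJG HAr HAG HAJ Hkm.
have Hrk' : \rank (eigenspace J (-1)) = \rank (eigenspace J (- - 1)) by rewrite opprK.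
have /andP[b1 b2] := core (s := -1) (or_intror erefl) HJT HJ Hrk' HGu HJG HAr HAG HAJ Hkm.
rewrite opprK in b1 b2.
by split.
Qed.
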